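(* Let $\nu>-1$ be real and let $0<j_1<j_2<\cdots$ be the positive zeros of $J_\nu(\cdot;q^2)$. Then for all $n,m\ge1$, $$\int_0^1 x\,J_\nu(qj_nx;q^2)J_\nu(qj_mx;q^2)\,d_qx=-\tfrac12(1-q)q^{\nu-1}J_{\nu+1}(qj_n;q^2)J_\nu'(j_n;q^2)\,\delta_{n,m},$$ and moreover $$-\tfrac12(1-q)q^{\nu-1}J_{\nu+1}(qj_n;q^2)J_\nu'(j_n;q^2)=\tfrac12(1-q)^2q^{\nu-2}\big(D_qJ_\nu(\cdot;q^2)\big)(j_n)\,J_\nu'(j_n;q^2)=-\tfrac12(1-q)q^{\nu-2}j_n^{-1}J_\nu(qj_n;q^2)J_\nu'(j_n;q^2)=-\tfrac12(1-q)q^{-2}J_{\nu+1}(j_n;q^2)J_\nu'(j_n;q^2).$$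
   Context: Fix $0<q<1$. For $a\in\mathbb C$ put $(a;q)_0=1$, $(a;q)_k=\prod_{i=0}^{k-1}(1-aq^i)$, $(a;q)_\infty=\prod_{i\ge0}(1-aq^i)$. For $\nu\in\mathbb C$ and $x\in\mathbb C\setminus\{0\}$ the Hahn–Exton $q$-Bessel function is $$J_\nu(x;q^2)=\frac{x^\nu}{(q^2;q^2)_\infty}\sum_{k=0}^\infty\frac{(-1)^kq^{k(k+1)}(q^{2\nu+2k+2};q^2)_\infty}{(q^2;q^2)_k}\,x^{2k},$$ with $x^\nu=\exp(\nu\operatorname{Log}x)$ (principal branch). $J_\nu'$ is the ordinary derivative in $x$. The $q$-derivative is $(D_qf)(x)=\frac{f(x)-f(qx)}{(1-q)x}$ for $x\ne0$, and the $q$-integral is $\int_0^z f(x)\,d_qx=(1-q)z\sum_{k\ge0}f(zq^k)q^k$. $\delta_{n,m}$ is the Kronecker delta. *)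

(* Defs.v *)
From Stdlib Require Import Reals.
From Coquelicot Require Import Coquelicot.
Open Scope R_scope.

Fixpoint qpoch (a q : R) (k : nat) : R :=
  match k with
  | O => 1
  | S k' => qpoch a q k' * (1 - a * q ^ k')
  end.

Definition qpoch_inf (a q : R) : R :=
  real (Lim_seq (fun N => qpoch a q N)).

(* Hahn--Exton q-Bessel function J_nu(x;q^2), for real x > 0
   (x^nu = exp(nu ln x), the principal branch on the positive axis). *)
Definition qJ (q nu x : R) : R :=
  Rpower x nu / qpoch_inf (q ^ 2) (q ^ 2) *
  Series (fun k => (-1) ^ k * q ^ (k * (k + 1)) *
                   qpoch_inf (Rpower q (2 * nu + 2 * INR k + 2)) (q ^ 2)
                   / qpoch (q ^ 2) (q ^ 2) k * x ^ (2 * k)).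

Definition Dq (q : R) (f : R -> R) (x : R) : R :=
  (f x - f (q * x)) / ((1 - q) * x).

(* is_qint q f z v  :<->  int_0^z f(x) d_qx = v, i.e. the series
   (1-q) z sum_k f(z q^k) q^k converges to v. *)
Definition is_qint (q : R) (f : R -> R) (z v : R) : Prop :=
  is_series (fun k => (1 - q) * z * (f (z * q ^ k) * q ^ k)) v.

Definition kdelta (n m : nat) : R := if Nat.eqb n m then 1 else 0.

(* Main.v *)
Require Import Defs.
From Stdlib Require Import Reals Lra Lia.
From Coquelicot Require Import Coquelicot.
Open Scope R_scope.


Lemma isd_plus f g x df dg : is_derive f x df -> is_derive g x dg -> is_derive (fun y => f y + g y) x (df + dg).
Proof. intros; apply (is_derive_plus f g); auto. Qed.
Lemma isd_minus f g x df dg : is_derive f x df -> is_derive g x dg -> is_derive (fun y => f y - g y) x (df - dg).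
Proof. intros; apply (is_derive_minus f g); auto. Qed.
Lemma isd_mult f g x df dg : is_derive f x df -> is_derive g x dg -> is_derive (fun y => f y * g y) x (df * g x + f x * dg).
Proof. intros; apply (is_derive_mult f g); auto. intros; apply Rmult_comm. Qed.
Lemma isd_const (c : R) x : is_derive (fun _ => c) x 0.
Proof. apply (is_derive_const c). Qed.
Lemma isd_id x : is_derive (fun y : R => y) x 1.
Proof. apply (is_derive_id x). Qed.
Lemma isd_comp f g x df dg : is_derive f (g x) df -> is_derive g x dg -> is_derive (fun y => f (g y)) x (dg * df).
Proof. intros; apply (is_derive_comp f g); auto. Qed.

Lemma real_mult c L : real (Rbar_mult (Finite c) L) = c * real L.
Proof. destruct L as [l| |]; simpl; try ring;
 unfold Rbar_mult, Rbar_mult'; simpl; repeat destruct Rle_dec; repeat destruct Rle_lt_or_eq_dec; simpl; ring. Qed.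

Lemma qpoch_S a b N : qpoch a b (S N) = (1 - a) * qpoch (a*b) b N.
Proof. induction N.
 - simpl. ring.
 - change (qpoch a b (S (S N))) with (qpoch a b (S N) * (1 - a * b ^ (S N))).
   rewrite IHN. simpl. ring. Qed.

Lemma qpoch_inf_rec a b : qpoch_inf a b = (1 - a) * qpoch_inf (a*b) b.
Proof. unfold qpoch_inf. rewrite <- Lim_seq_incr_1.
 rewrite (Lim_seq_ext _ (fun n => (1-a) * qpoch (a*b) b n)).
 - rewrite Lim_seq_scal_l. apply real_mult.
 - intros; apply qpoch_S. Qed.

Lemma pow_le1' b N : 0 <= b <= 1 -> b ^ N <= 1.
Proof. intros Hb. induction N; simpl. lra. assert (0 <= b^N) by (apply pow_le; lra). nra. Qed.

Lemma qpoch_bnd a b N : 0 <= a <= 1 -> 0 <= b <= 1 -> 0 <= qpoch a b N <= 1.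
Proof. intros Ha Hb. induction N; simpl. lra.
 assert (0 <= b ^ N <= 1). { split. apply pow_le; lra. apply pow_le1'; lra. }
 assert (0 <= a * b^N <= 1) by nra. nra. Qed.

Lemma qpoch_inf_bnd a b : 0 <= a <= 1 -> 0 <= b <= 1 -> Rabs (qpoch_inf a b) <= 1.
Proof. intros Ha Hb. unfold qpoch_inf.
 assert (H1: Rbar_le (Lim_seq (fun _ => 0)) (Lim_seq (fun N => qpoch a b N))).
 { apply Lim_seq_le_loc. exists O; intros; apply qpoch_bnd; auto. }
 assert (H2: Rbar_le (Lim_seq (fun N => qpoch a b N)) (Lim_seq (fun _ => 1))).
 { apply Lim_seq_le_loc. exists O; intros; apply qpoch_bnd; auto. }
 rewrite Lim_seq_const in H1, H2.
 destruct (Lim_seq (fun N => qpoch a b N)) as [l| |]; simpl in *; try contradiction.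
 apply Rabs_le; lra. Qed.

Lemma qpoch_lower Q k : 0 < Q < 1 -> (1 - Q)^k <= qpoch Q Q k.
Proof. intros HQ. induction k; simpl. lra.
 assert (0 <= Q ^ k <= 1). { split. apply pow_le; lra. apply pow_le1'; lra. }
 assert (0 < (1-Q)^k) by (apply pow_lt; lra).
 assert (Q * Q^k <= Q) by nra.
 rewrite (Rmult_comm (1-Q)). apply Rmult_le_compat; nra. Qed.

Lemma qpoch_pos Q k : 0 < Q < 1 -> 0 < qpoch Q Q k.
Proof. intros. eapply Rlt_le_trans; [|apply qpoch_lower; auto]. apply pow_lt; lra. Qed.

Lemma Rpower_lt1 q e : 0 < q < 1 -> 0 < e -> 0 < Rpower q e < 1.
Proof. intros Hq He. unfold Rpower. split. apply exp_pos.
 rewrite <- exp_0. apply exp_increasing.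
 assert (ln q < 0). { rewrite <- ln_1. apply ln_increasing; lra. } nra. Qed.


Definition cf q mu (k : nat) := (-1)^k * q^(k*(k+1)) * qpoch_inf (Rpower q (2*mu + 2*INR k + 2)) (q^2) / qpoch (q^2) (q^2) k.

Lemma q2_bnd q : 0 < q < 1 -> 0 < q^2 < 1.
Proof. intros. simpl. nra. Qed.

Lemma cf_bound q mu k : 0 < q < 1 -> -1 < mu -> Rabs (cf q mu k) <= q^(k*(k+1)) / (1-q^2)^k.
Proof. intros Hq Hmu. pose proof (q2_bnd q Hq) as HQ. unfold cf, Rdiv.
 rewrite !Rabs_mult, pow_1_abs, Rabs_Rinv, (Rabs_pos_eq (q^_)), (Rabs_pos_eq (qpoch _ _ _)).
 2: apply Rlt_le, qpoch_pos; auto. 2: apply pow_le; lra.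
 2: apply Rgt_not_eq, qpoch_pos; auto.
 assert (Hp : Rabs (qpoch_inf (Rpower q (2 * mu + 2 * INR k + 2)) (q ^ 2)) <= 1).
 { apply qpoch_inf_bnd. 2: lra. pose proof (pos_INR k).
   assert (0 < Rpower q (2 * mu + 2 * INR k + 2) < 1) by (apply Rpower_lt1; lra). lra. }
 assert (H1 : 0 < (1 - q^2)^k) by (apply pow_lt; lra).
 assert (H2 : (1 - q^2)^k <= qpoch (q^2) (q^2) k) by (apply qpoch_lower; auto).
 assert (H3: / qpoch (q^2) (q^2) k <= / (1-q^2)^k) by (apply Rinv_le_contravar; auto).
 assert (0 <= q ^ (k*(k+1))) by (apply pow_le; lra).
 assert (0 < / qpoch (q^2) (q^2) k) by (apply Rinv_0_lt_compat, qpoch_pos; auto).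
 assert (0 <= Rabs (qpoch_inf (Rpower q (2 * mu + 2 * INR k + 2)) (q ^ 2))) by apply Rabs_pos.
 rewrite Rmult_1_l. apply Rmult_le_compat; try nra.
 Qed.

Lemma exr_le (a b : nat -> R) : (forall n, Rabs (a n) <= b n) -> ex_series b -> ex_series a.
Proof. intros H Hb. apply (@ex_series_le R_AbsRing R_CompleteNormedModule a b); auto. Qed.

Lemma w_series q r : 0 < q < 1 -> 0 < r -> ex_series (fun k => q^(k*(k+1)) * r^k).
Proof. intros Hq Hr.
 assert (Hpos : forall n, 0 < q^(n*(n+1)) * r^n).
 { intros. apply Rmult_lt_0_compat; apply pow_lt; lra. }
 apply (exr_le _ (fun k => Rabs (q^(k*(k+1)) * r^k))).
 { intros. right. reflexivity. }
 apply (ex_series_DAlembert _ 0). lra. intros; apply Rgt_not_eq, Hpos.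
 apply (is_lim_seq_ext (fun n => r * q^2 * (q^2)^n)).
 { intros n.
   assert (E: q^(S n*(S n+1)) = q^(n*(n+1)) * (q^2*(q^2)^n)).
   { replace (S n * (S n + 1))%nat with (n*(n+1) + 2*(S n))%nat by lia.
     rewrite pow_add. f_equal. rewrite pow_mult. reflexivity. }
   rewrite E. simpl (r ^ S n). pose proof (Hpos n).
   assert (0 < q^(n*(n+1))) by (apply pow_lt; lra). assert (0 < r^n) by (apply pow_lt; lra).
   rewrite Rabs_pos_eq.
   2: { apply Rlt_le. unfold Rdiv. apply Rmult_lt_0_compat. 2: apply Rinv_0_lt_compat, Hpos.
        assert (0 < q^2 * (q^2)^n) by (apply Rmult_lt_0_compat; apply pow_lt; nra). 
        repeat apply Rmult_lt_0_compat; auto. all: try lra. apply pow_lt; nra. }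
   field. split; lra. }
 replace 0 with (r * q^2 * 0) by ring. apply (is_lim_seq_scal_l _ (r*q^2) 0).
 apply is_lim_seq_geom. pose proof (q2_bnd q Hq). rewrite Rabs_pos_eq; lra. Qed.

Lemma cf_abs_series q mu y : 0 < q < 1 -> -1 < mu -> ex_series (fun k => Rabs (cf q mu k * y^k)).
Proof. intros Hq Hmu. pose proof (q2_bnd q Hq) as HQ.
 set (r := Rabs y / (1 - q^2) + 1).
 assert (Hr0 : 0 <= Rabs y / (1 - q^2)) by (apply Rmult_le_pos; [apply Rabs_pos| left; apply Rinv_0_lt_compat; lra]).
 apply (exr_le _ (fun k => q^(k*(k+1)) * r^k)).
 2: apply w_series; auto; unfold r; lra.
 intros k. rewrite Rabs_Rabsolu, Rabs_mult, <- RPow_abs.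
 eapply Rle_trans. apply Rmult_le_compat_r. apply pow_le, Rabs_pos. apply cf_bound; auto.
 assert (0 < (1-q^2)^k) by (apply pow_lt; lra).
 assert (E: q ^ (k * (k + 1)) / (1 - q ^ 2) ^ k * Rabs y ^ k = q^(k*(k+1)) * (Rabs y / (1-q^2))^k).
 { unfold Rdiv. rewrite Rpow_mult_distr, pow_inv. field. lra. }
 rewrite E. apply Rmult_le_compat_l. apply pow_le; lra. apply pow_incr. unfold r; lra. Qed.

Lemma cf_radius q mu x : 0 < q < 1 -> -1 < mu -> Rbar_lt (Rabs x) (CV_radius (cf q mu)).
Proof. intros Hq Hmu.
 assert (H: Rbar_le (Rabs x + 1) (CV_radius (cf q mu))).
 { unfold CV_radius. destruct (Lub_Rbar_correct (CV_disk (cf q mu))) as [H _]. apply H.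
   unfold CV_disk. apply cf_abs_series; auto. }
 destruct (CV_radius (cf q mu)); simpl in *; auto. lra. Qed.

Lemma cfd_radius q mu x : 0 < q < 1 -> -1 < mu -> Rbar_lt (Rabs x) (CV_radius (PS_derive (cf q mu))).
Proof. intros. rewrite CV_radius_derive. apply cf_radius; auto. Qed.

Definition G q mu y := PSeries (cf q mu) y.
Definition G' q mu y := PSeries (PS_derive (cf q mu)) y.

Lemma qJ_G q mu x : qJ q mu x = Rpower x mu * / qpoch_inf (q^2) (q^2) * G q mu (x^2).
Proof. unfold qJ, G, PSeries, Rdiv. f_equal. apply Series_ext. intros k. rewrite (pow_mult x 2 k). reflexivity. Qed.

Lemma G_derive q mu y : 0 < q < 1 -> -1 < mu -> is_derive (G q mu) y (G' q mu y).
Proof. intros. apply is_derive_PSeries. apply cf_radius; auto. Qed.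

Lemma PS_bound (a : nat -> R) R0 : (forall x, Rbar_lt (Rabs x) (CV_radius a)) ->
  exists M, forall y, Rabs y <= R0 -> Rabs (PSeries a y) <= M.
Proof. intros Hr. exists (Series (fun n => Rabs (a n * R0 ^ n))).
 intros y Hy. assert (Hex: ex_series (fun n => Rabs (a n * R0 ^ n))) by (apply CV_disk_inside; auto).
 unfold PSeries. eapply Rle_trans. apply Series_Rabs. apply CV_disk_inside; auto.
 apply Series_le; auto. intros n. split. apply Rabs_pos.
 rewrite !Rabs_mult. apply Rmult_le_compat_l. apply Rabs_pos.
 rewrite <- !RPow_abs. apply pow_incr. split. apply Rabs_pos. rewrite (Rabs_pos_eq R0). auto.
 pose proof (Rabs_pos y). lra. Qed.

Lemma Rp2 q : 0 < q -> Rpower q 2 = q^2.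
Proof. intros. replace 2 with (INR 2) by (simpl; ring). apply Rpower_pow; auto. Qed.

Lemma Rpk q k : 0 < q -> Rpower q (2 * INR k) = (q^2)^k.
Proof. intros. rewrite <- pow_mult. replace (2 * INR k) with (INR (2*k)) by (rewrite mult_INR; simpl; ring).
 apply Rpower_pow; auto. Qed.

Lemma cf_rel1 q mu k : 0 < q -> cf q mu k = (1 - Rpower q (2*mu+2) * (q^2)^k) * cf q (mu+1) k.
Proof. intros Hq. unfold cf. rewrite (qpoch_inf_rec (Rpower q (2*mu+2*INR k+2))).
 replace (Rpower q (2*mu+2*INR k+2) * q^2) with (Rpower q (2*(mu+1)+2*INR k+2)).
 2: { rewrite <- Rp2, <- Rpower_plus; auto. f_equal; ring. }
 replace (Rpower q (2*mu+2*INR k+2)) with (Rpower q (2*mu+2) * (q^2)^k).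
 2: { rewrite <- Rpk, <- Rpower_plus; auto. f_equal; ring. }
 unfold Rdiv; ring. Qed.

Lemma qpow_S q n : q^(S n*(S n+1)) = q^(n*(n+1)) * (q^2*(q^2)^n).
Proof. replace (S n * (S n + 1))%nat with (n*(n+1) + 2*(S n))%nat by lia.
 rewrite pow_add. f_equal. rewrite pow_mult. reflexivity. Qed.

Lemma cf_rel2 q mu i : 0 < q < 1 -> cf q mu (S i) * (1 - (q^2)^(S i)) = - q^2 * (q^2)^i * cf q (mu+1) i.
Proof. intros Hq. pose proof (q2_bnd q Hq) as HQ. unfold cf. rewrite qpow_S.
 replace (2 * mu + 2 * INR (S i) + 2) with (2 * (mu + 1) + 2 * INR i + 2) by (rewrite S_INR; ring).
 change (qpoch (q^2) (q^2) (S i)) with (qpoch (q^2) (q^2) i * (1 - q^2 * (q^2)^i)).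
 assert (H1: qpoch (q^2) (q^2) i <> 0) by (apply Rgt_not_eq, qpoch_pos; auto).
 assert (0 <= (q^2)^i <= 1) by (split; [apply pow_le; lra| apply pow_le1'; lra]).
 assert (H2: 1 - q^2 * (q^2)^i <> 0) by nra.
 rewrite <- (tech_pow_Rmult (q^2) i), <- (tech_pow_Rmult (-1) i). field. auto. Qed.

Lemma exs_scal (a : nat -> R) c : ex_series a -> ex_series (fun n => c * a n).
Proof. intros [l H]. exists (c * l). apply (is_series_scal_l c a l H). Qed.

Lemma exs_minus (a b : nat -> R) : ex_series a -> ex_series b -> ex_series (fun n => a n - b n).
Proof. intros [l H] [l' H']. exists (l - l'). apply (is_series_minus a b l l' H H'). Qed.

Lemma cf_ex q mu y : 0 < q < 1 -> -1 < mu -> ex_series (fun k => cf q mu k * y^k).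
Proof. intros. apply ex_series_Rabs. apply cf_abs_series; auto. Qed.

Lemma G1 q mu y : 0 < q < 1 -> -1 < mu ->
  G q mu y = G q (mu+1) y - Rpower q (2*mu+2) * G q (mu+1) (q^2*y).
Proof. intros Hq Hmu. unfold G, PSeries. rewrite <- Series_scal_l. rewrite <- Series_minus.
 - apply Series_ext; intros k. rewrite cf_rel1 by lra. rewrite Rpow_mult_distr. ring.
 - apply cf_ex; auto; lra.
 - apply exs_scal, cf_ex; auto; lra. Qed.

Lemma G2 q mu y : 0 < q < 1 -> -1 < mu ->
  G q mu y - G q mu (q^2*y) = - q^2 * y * G q (mu+1) (q^2*y).
Proof. intros Hq Hmu. unfold G, PSeries. rewrite <- Series_minus by (apply cf_ex; auto).
 rewrite Series_incr_1 by (apply exs_minus; apply cf_ex; auto).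
 rewrite <- Series_scal_l. simpl (y ^ 0). simpl ((q^2*y)^0). rewrite Rminus_diag, Rplus_0_l.
 apply Series_ext; intros k. rewrite !Rpow_mult_distr.
 replace (cf q mu (S k) * y ^ S k - cf q mu (S k) * ((q ^ 2) ^ S k * y ^ S k))
   with ((cf q mu (S k) * (1 - (q^2)^(S k))) * y^(S k)) by ring.
 rewrite cf_rel2 by auto. simpl (y ^ S k). ring. Qed.


Lemma Eq3 q nu y : 0 < q < 1 -> -1 < nu ->
  G q nu y - (1 + Rpower (q^2) nu) * G q nu (q^2*y) + Rpower (q^2) nu * G q nu (q^2*(q^2*y))
   + q^2*y*G q nu (q^2*y) = 0.
Proof. intros Hq Hnu.
 pose proof (G1 q nu (q^2*y) Hq Hnu) as H1.
 pose proof (G2 q nu y Hq Hnu) as H2a.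
 pose proof (G2 q nu (q^2*y) Hq Hnu) as H2b.
 assert (Hs: Rpower q (2*nu+2) = Rpower (q^2) nu * q^2).
 { rewrite <- Rp2 by lra. rewrite Rpower_mult, <- Rpower_plus. f_equal; ring. }
 rewrite Hs in H1.
 set (s := Rpower (q^2) nu) in *.
 set (g0 := G q nu y) in *. set (g1 := G q nu (q^2*y)) in *. set (g2 := G q nu (q^2*(q^2*y))) in *.
 set (h1 := G q (nu+1) (q^2*y)) in *. set (h2 := G q (nu+1) (q^2*(q^2*y))) in *.
 assert (E0: g0 = g1 - q^2*y*h1) by lra.
 assert (E2: g2 = g1 + q^2*(q^2*y)*h2) by lra.
 rewrite E0, E2, H1. ring. Qed.

Definition Vt (F : R -> R) Q a2 b2 k :=
  F (a2*Q^k) * F (b2*Q^(S k)) - F (a2*Q^(S k)) * F (b2*Q^k).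

Definition tt (F : R -> R) Q s a2 b2 k := Q^(S k) * s^k * F (a2*Q^(S k)) * F (b2*Q^(S k)).

Lemma tele_step (F : R -> R) Q s a2 b2 k :
  (forall y, F y - (1+s)*F(Q*y) + s*F(Q*(Q*y)) + Q*y*F(Q*y) = 0) ->
  s^k * Vt F Q a2 b2 k - s^(S k) * Vt F Q a2 b2 (S k) = (b2 - a2) * tt F Q s a2 b2 k.
Proof. intros E. unfold Vt, tt.
 pose proof (E (a2*Q^k)) as Ea. pose proof (E (b2*Q^k)) as Eb.
 replace (Q*(a2*Q^k)) with (a2*Q^(S k)) in Ea by (simpl; ring).
 replace (Q*(a2*Q^(S k))) with (a2*Q^(S (S k))) in Ea by (simpl; ring).
 replace (Q*(b2*Q^k)) with (b2*Q^(S k)) in Eb by (simpl; ring).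
 replace (Q*(b2*Q^(S k))) with (b2*Q^(S (S k))) in Eb by (simpl; ring).
 set (g0 := F (a2*Q^k)) in *. set (g1 := F (a2*Q^(S k))) in *. set (g2 := F (a2*Q^(S (S k)))) in *.
 set (e0 := F (b2*Q^k)) in *. set (e1 := F (b2*Q^(S k))) in *. set (e2 := F (b2*Q^(S (S k)))) in *.
 assert (Hr : s ^ k * (g0 * e1 - g1 * e0) - s ^ S k * (g1 * e2 - g2 * e1) - (b2 - a2) * (Q ^ S k * s ^ k * g1 * e1)
   = s^k * (e1 * (g0 - (1 + s) * g1 + s * g2 + a2 * Q ^ S k * g1) - g1 * (e0 - (1 + s) * e1 + s * e2 + b2 * Q ^ S k * e1)))
   by (simpl; ring).
 rewrite Ea, Eb in Hr. lra. Qed.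

Lemma telescope (F : R -> R) Q s a2 b2 :
  (forall y, F y - (1+s)*F(Q*y) + s*F(Q*(Q*y)) + Q*y*F(Q*y) = 0) ->
  forall N, (b2 - a2) * sum_n (tt F Q s a2 b2) N = Vt F Q a2 b2 0 - s^(S N) * Vt F Q a2 b2 (S N).
Proof. intros E N. induction N.
 - rewrite sum_O. rewrite <- (tele_step F Q s a2 b2 0 E). simpl. ring.
 - rewrite sum_Sn. change (plus (sum_n (tt F Q s a2 b2) N) (tt F Q s a2 b2 (S N)))
     with (sum_n (tt F Q s a2 b2) N + tt F Q s a2 b2 (S N)).
   rewrite Rmult_plus_distr_l, IHN, <- (tele_step F Q s a2 b2 (S N) E). ring. Qed.


Lemma squeeze_geom (u : nat -> R) C r : 0 <= r < 1 -> (forall N, Rabs (u N) <= C * r^N) -> is_lim_seq u 0.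
Proof. intros Hr H.
 assert (Hg : Rabs r < 1) by (rewrite Rabs_pos_eq; lra).
 pose proof (is_lim_seq_scal_l _ C _ (is_lim_seq_geom r Hg)) as H1. simpl in H1. rewrite Rmult_0_r in H1.
 pose proof (proj1 (is_lim_seq_opp _ _) H1) as H2. simpl in H2. rewrite Ropp_0 in H2.
 apply (is_lim_seq_le_le (fun N => - (C * r^N)) u (fun N => C * r^N)); auto.
 intros N. specialize (H N). apply Rabs_le_between in H. lra. Qed.

Lemma sQ_bnd q nu : 0 < q < 1 -> -1 < nu -> 0 < Rpower (q^2) nu * q^2 < 1 /\ 0 < Rpower (q^2) nu.
Proof. intros Hq Hnu.
 assert (Hs: Rpower q (2*nu+2) = Rpower (q^2) nu * q^2).
 { rewrite <- Rp2 by lra. rewrite Rpower_mult, <- Rpower_plus. f_equal; ring. }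
 rewrite <- Hs. split. apply Rpower_lt1; lra. unfold Rpower; apply exp_pos. Qed.

Lemma Qk_bnd q k : 0 < q < 1 -> 0 <= (q^2)^k <= 1.
Proof. intros. pose proof (q2_bnd q H). split. apply pow_le; lra. apply pow_le1'; lra. Qed.

Lemma lim_V q nu a2 b2 : 0 < q < 1 -> -1 < nu -> 0 <= a2 -> 0 <= b2 ->
  is_lim_seq (fun N => Rpower (q^2) nu ^ (S N) * Vt (G q nu) (q^2) a2 b2 (S N)) 0.
Proof. intros Hq Hnu Ha Hb. destruct (sQ_bnd q nu Hq Hnu) as [HsQ Hs].
 pose proof (q2_bnd q Hq) as HQ.
 set (s := Rpower (q^2) nu) in *.
 destruct (PS_bound (cf q nu) (a2+b2) (fun x => cf_radius q nu x Hq Hnu)) as [M HM].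
 destruct (PS_bound (cf q (nu+1)) (a2+b2) (fun x => cf_radius q (nu+1) x Hq ltac:(lra))) as [M' HM'].
 assert (HM0 : 0 <= M) by (eapply Rle_trans; [apply Rabs_pos| apply (HM 0)]; rewrite Rabs_R0; lra).
 assert (HM0' : 0 <= M') by (eapply Rle_trans; [apply Rabs_pos| apply (HM' 0)]; rewrite Rabs_R0; lra).
 apply (squeeze_geom _ (s*q^2 * (M * q^2 * (a2+b2) * M')) (s*q^2)). lra.
 intros N. 
 assert (Hk : forall k, Rabs (s^k * Vt (G q nu) (q^2) a2 b2 k) <= (M * q^2 * (a2+b2) * M') * (s*q^2)^k).
 { intros k. unfold Vt.
   pose proof (G2 q nu (a2*(q^2)^k) Hq Hnu) as Ea. pose proof (G2 q nu (b2*(q^2)^k) Hq Hnu) as Eb.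
   replace (q^2*(a2*(q^2)^k)) with (a2*(q^2)^(S k)) in Ea by (simpl; ring).
   replace (q^2*(b2*(q^2)^k)) with (b2*(q^2)^(S k)) in Eb by (simpl; ring).
   pose proof (Qk_bnd q k Hq). pose proof (Qk_bnd q (S k) Hq).
   assert (Hy: forall c, 0 <= c <= 1 -> forall z, 0 <= z -> z <= a2 + b2 -> Rabs (z * c) <= a2 + b2).
   { intros c Hc z Hz1 Hz2. rewrite Rabs_pos_eq by nra. nra. }
   pose proof (HM (a2*(q^2)^k) (Hy _ H a2 Ha ltac:(lra))) as B1.
   pose proof (HM (b2*(q^2)^k) (Hy _ H b2 Hb ltac:(lra))) as B2.
   pose proof (HM' (a2*(q^2)^(S k)) (Hy _ H0 a2 Ha ltac:(lra))) as B3.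
   pose proof (HM' (b2*(q^2)^(S k)) (Hy _ H0 b2 Hb ltac:(lra))) as B4.
   unfold G in *. 
   set (g0 := PSeries (cf q nu) (a2 * (q ^ 2) ^ k)) in *.
   set (g1 := PSeries (cf q nu) (a2 * (q ^ 2) ^ S k)) in *.
   set (e0 := PSeries (cf q nu) (b2 * (q ^ 2) ^ k)) in *.
   set (e1 := PSeries (cf q nu) (b2 * (q ^ 2) ^ S k)) in *.
   set (ha := PSeries (cf q (nu+1)) (a2 * (q ^ 2) ^ S k)) in *.
   set (hb := PSeries (cf q (nu+1)) (b2 * (q ^ 2) ^ S k)) in *.
   assert (EV: g0 * e1 - g1 * e0 = (q^2)^k * (q^2 * (g0 * b2 * hb - e0 * a2 * ha))) by nra.
   rewrite EV, Rpow_mult_distr.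
   replace (s ^ k * ((q ^ 2) ^ k * (q ^ 2 * (g0 * b2 * hb - e0 * a2 * ha))))
     with ((s ^ k * (q ^ 2) ^ k) * (q ^ 2 * (g0 * b2 * hb - e0 * a2 * ha))) by ring.
   rewrite Rabs_mult, (Rmult_comm (M * _ * _ * _)).
   assert (0 < s^k * (q^2)^k) by (apply Rmult_lt_0_compat; apply pow_lt; lra).
   rewrite (Rabs_pos_eq (s^k * (q^2)^k)) by lra. apply Rmult_le_compat_l. lra.
   rewrite Rabs_mult, (Rabs_pos_eq (q^2)) by lra.
   replace (M * q ^ 2 * (a2 + b2) * M') with (q^2 * (M * (a2+b2) * M')) by ring.
   apply Rmult_le_compat_l. lra.
   eapply Rle_trans. apply Rabs_triang. rewrite Rabs_Ropp, !Rabs_mult, (Rabs_pos_eq a2), (Rabs_pos_eq b2) by lra.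
   pose proof (Rabs_pos g0). pose proof (Rabs_pos e0). pose proof (Rabs_pos ha). pose proof (Rabs_pos hb).
   assert (Rabs g0 * b2 * Rabs hb <= M * b2 * M').
   { apply Rmult_le_compat; try nra; apply Rmult_le_compat_r; lra. }
   assert (Rabs e0 * a2 * Rabs ha <= M * a2 * M').
   { apply Rmult_le_compat; try nra; apply Rmult_le_compat_r; lra. }
   nra. }
 eapply Rle_trans. apply Hk. simpl. lra. Qed.


Ltac req := match goal with |- @eq _ ?a ?b => change (@eq R a b) end; ring.

Lemma isd_eq (f : R -> R) (x l l' : R) : is_derive f x l -> l = l' -> is_derive f x l'.
Proof. intros H ->; auto. Qed.

Lemma Gsc_derive q nu c y : 0 < q < 1 -> -1 < nu ->
  is_derive (fun z => G q nu (z * c)) y (c * G' q nu (y * c)).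
Proof. intros Hq Hnu. eapply isd_eq. apply (isd_comp (G q nu) (fun z => z * c)).
 apply G_derive; auto.
 apply isd_mult; [apply isd_id| apply isd_const]. cbv beta; cbv beta; ring. Qed.

Definition dVt q nu b2 k :=
  (q^2)^k * G' q nu (b2*(q^2)^k) * G q nu (b2*(q^2)^(S k))
  - (q^2)^(S k) * G' q nu (b2*(q^2)^(S k)) * G q nu (b2*(q^2)^k).

Lemma Vt_derive q nu b2 k : 0 < q < 1 -> -1 < nu ->
  is_derive (fun y => Vt (G q nu) (q^2) y b2 k) b2 (dVt q nu b2 k).
Proof. intros Hq Hnu. unfold Vt, dVt. eapply isd_eq.
 apply isd_minus.
 apply (isd_mult (fun y => G q nu (y*(q^2)^k)) (fun _ => G q nu (b2*(q^2)^(S k)))).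
 apply Gsc_derive; auto. apply isd_const.
 apply (isd_mult (fun y => G q nu (y*(q^2)^(S k))) (fun _ => G q nu (b2*(q^2)^k))).
 apply Gsc_derive; auto. apply isd_const.
 cbv beta; ring. Qed.

Lemma tt_derive q nu s b2 y0 k : 0 < q < 1 -> -1 < nu ->
  is_derive (fun y => tt (G q nu) (q^2) s y b2 k) y0
    ((q^2)^(S k) * s^k * ((q^2)^(S k) * G' q nu (y0 * (q^2)^(S k))) * G q nu (b2*(q^2)^(S k))).
Proof. intros Hq Hnu. unfold tt. eapply isd_eq.
 apply (isd_mult (fun y => (q^2)^(S k) * s^k * G q nu (y*(q^2)^(S k))) (fun _ => G q nu (b2*(q^2)^(S k)))).
 apply (isd_mult (fun _ => (q^2)^(S k) * s^k)). apply isd_const. apply Gsc_derive; auto. apply isd_const.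
 cbv beta; ring. Qed.

Lemma S_derive q nu s b2 y0 N : 0 < q < 1 -> -1 < nu ->
  exists d, is_derive (fun y => sum_n (tt (G q nu) (q^2) s y b2) N) y0 d.
Proof. intros Hq Hnu. induction N.
 - eexists. apply (is_derive_ext (fun y => tt (G q nu) (q^2) s y b2 0)).
   intros; rewrite sum_O; reflexivity. apply tt_derive; auto.
 - destruct IHN as [d Hd]. eexists.
   apply (is_derive_ext (fun y => sum_n (tt (G q nu) (q ^ 2) s y b2) N + tt (G q nu) (q^2) s y b2 (S N))).
   intros; rewrite sum_Sn; reflexivity.
   apply (isd_plus (fun y => sum_n (tt (G q nu) (q ^ 2) s y b2) N)). apply Hd. apply tt_derive; auto.
Qed.

Lemma S_at_diag q nu b2 N : 0 < q < 1 -> -1 < nu ->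
  sum_n (tt (G q nu) (q^2) (Rpower (q^2) nu) b2 b2) N
  = - dVt q nu b2 0 + Rpower (q^2) nu ^ (S N) * dVt q nu b2 (S N).
Proof. intros Hq Hnu. set (s := Rpower (q^2) nu).
 destruct (S_derive q nu s b2 b2 N Hq Hnu) as [d Hd].
 assert (H1 : is_derive (fun y => (b2 - y) * sum_n (tt (G q nu) (q^2) s y b2) N) b2
                (- sum_n (tt (G q nu) (q^2) s b2 b2) N)).
 { eapply isd_eq. apply isd_mult. apply isd_minus. apply isd_const. apply isd_id. apply Hd. cbv beta; ring. }
 assert (H2 : is_derive (fun y => (b2 - y) * sum_n (tt (G q nu) (q^2) s y b2) N) b2
                (dVt q nu b2 0 - s ^ (S N) * dVt q nu b2 (S N))).
 { eapply is_derive_ext. intros t. symmetry. apply telescope. intros y. apply Eq3; auto.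
   apply isd_minus. apply Vt_derive; auto. apply is_derive_scal. apply Vt_derive; auto. }
 pose proof (is_derive_unique _ _ _ H1). pose proof (is_derive_unique _ _ _ H2). lra. Qed.


Lemma lim_dV q nu b2 : 0 < q < 1 -> -1 < nu -> 0 <= b2 ->
  is_lim_seq (fun N => Rpower (q^2) nu ^ (S N) * dVt q nu b2 (S N)) 0.
Proof. intros Hq Hnu Hb. destruct (sQ_bnd q nu Hq Hnu) as [HsQ Hs].
 pose proof (q2_bnd q Hq) as HQ.
 set (s := Rpower (q^2) nu) in *.
 destruct (PS_bound (cf q nu) b2 (fun x => cf_radius q nu x Hq Hnu)) as [M HM].
 destruct (PS_bound (PS_derive (cf q nu)) b2 (fun x => cfd_radius q nu x Hq Hnu)) as [M' HM'].
 assert (HM0 : 0 <= M) by (eapply Rle_trans; [apply Rabs_pos| apply (HM 0)]; rewrite Rabs_R0; lra).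
 assert (HM0' : 0 <= M') by (eapply Rle_trans; [apply Rabs_pos| apply (HM' 0)]; rewrite Rabs_R0; lra).
 apply (squeeze_geom _ (s*q^2 * (M' * M * 2)) (s*q^2)). lra.
 intros N.
 assert (Hk : forall k, Rabs (s^k * dVt q nu b2 k) <= (M' * M * 2) * (s*q^2)^k).
 { intros k. unfold dVt, G, G'.
   pose proof (Qk_bnd q k Hq). pose proof (Qk_bnd q (S k) Hq).
   assert (Hy: forall c, 0 <= c <= 1 -> Rabs (b2 * c) <= b2).
   { intros c Hc. rewrite Rabs_pos_eq by nra. nra. }
   pose proof (HM (b2*(q^2)^k) (Hy _ H)) as B1. pose proof (HM (b2*(q^2)^(S k)) (Hy _ H0)) as B2.
   pose proof (HM' (b2*(q^2)^k) (Hy _ H)) as B3. pose proof (HM' (b2*(q^2)^(S k)) (Hy _ H0)) as B4.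
   set (g0 := PSeries (cf q nu) (b2 * (q ^ 2) ^ k)) in *.
   set (g1 := PSeries (cf q nu) (b2 * (q ^ 2) ^ S k)) in *.
   set (d0 := PSeries (PS_derive (cf q nu)) (b2 * (q ^ 2) ^ k)) in *.
   set (d1 := PSeries (PS_derive (cf q nu)) (b2 * (q ^ 2) ^ S k)) in *.
   replace ((q ^ 2) ^ S k) with (q^2 * (q^2)^k) by (simpl; ring).
   replace (s ^ k * ((q ^ 2) ^ k * d0 * g1 - q ^ 2 * (q ^ 2) ^ k * d1 * g0))
     with ((s ^ k * (q ^ 2) ^ k) * (d0 * g1 - q ^ 2 * d1 * g0)) by ring.
   rewrite Rpow_mult_distr, Rabs_mult, (Rmult_comm (M' * M * 2)).
   assert (0 < s^k * (q^2)^k) by (apply Rmult_lt_0_compat; apply pow_lt; lra).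
   rewrite (Rabs_pos_eq (s^k * (q^2)^k)) by lra. apply Rmult_le_compat_l. lra.
   eapply Rle_trans. apply Rabs_triang. rewrite Rabs_Ropp, !Rabs_mult, (Rabs_pos_eq (q^2)) by lra.
   pose proof (Rabs_pos g0). pose proof (Rabs_pos g1). pose proof (Rabs_pos d0). pose proof (Rabs_pos d1).
   assert (Rabs d0 * Rabs g1 <= M' * M) by (apply Rmult_le_compat; lra).
   assert (Rabs d1 * Rabs g0 <= M' * M) by (apply Rmult_le_compat; lra).
   assert (q^2 * (Rabs d1 * Rabs g0) <= 1 * (Rabs d1 * Rabs g0)) by (apply Rmult_le_compat_r; [apply Rmult_le_pos; auto | lra]).
   lra. }
 eapply Rle_trans. apply Hk. simpl. lra. Qed.

Lemma series_diag q nu b2 : 0 < q < 1 -> -1 < nu -> 0 <= b2 ->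
  is_series (tt (G q nu) (q^2) (Rpower (q^2) nu) b2 b2) (- dVt q nu b2 0).
Proof. intros Hq Hnu Hb.
 assert (H : is_lim_seq (sum_n (tt (G q nu) (q^2) (Rpower (q^2) nu) b2 b2)) (- dVt q nu b2 0)).
 { eapply is_lim_seq_ext. intros N; symmetry; apply S_at_diag; auto.
   pose proof (is_lim_seq_plus' (fun _ => - dVt q nu b2 0) _ (- dVt q nu b2 0) 0 (is_lim_seq_const _) (lim_dV q nu b2 Hq Hnu Hb)) as H0.
   rewrite Rplus_0_r in H0. exact H0. }
 exact H. Qed.

Lemma series_off q nu a2 b2 : 0 < q < 1 -> -1 < nu -> 0 <= a2 -> 0 <= b2 -> a2 <> b2 ->
  is_series (tt (G q nu) (q^2) (Rpower (q^2) nu) a2 b2) (Vt (G q nu) (q^2) a2 b2 0 / (b2 - a2)).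
Proof. intros Hq Hnu Ha Hb Hab.
 assert (H : is_lim_seq (sum_n (tt (G q nu) (q^2) (Rpower (q^2) nu) a2 b2)) (Vt (G q nu) (q^2) a2 b2 0 / (b2 - a2))).
 { apply (is_lim_seq_ext (fun N => (Vt (G q nu) (q^2) a2 b2 0 - Rpower (q^2) nu ^ (S N) * Vt (G q nu) (q^2) a2 b2 (S N)) * / (b2 - a2))). intros N.
   assert (E := telescope (G q nu) (q^2) (Rpower (q^2) nu) a2 b2 (fun y => Eq3 q nu y Hq Hnu) N).
   rewrite <- E. field. lra.
   pose proof (is_lim_seq_minus' (fun _ => Vt (G q nu) (q^2) a2 b2 0) _ (Vt (G q nu) (q^2) a2 b2 0) 0 (is_lim_seq_const _) (lim_V q nu a2 b2 Hq Hnu Ha Hb)) as H0.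
   pose proof (is_lim_seq_scal_r _ (/ (b2 - a2)) _ H0) as H1. simpl in H1.
   rewrite Rminus_0_r in H1. exact H1. }
 exact H. Qed.


Lemma Rpower_1_l y : Rpower 1 y = 1.
Proof. unfold Rpower. rewrite ln_1, Rmult_0_r. apply exp_0. Qed.

Lemma Rpow_pow x y n : 0 < x -> Rpower (x^n) y = (Rpower x y)^n.
Proof. intros Hx. induction n. simpl. apply Rpower_1_l.
 simpl. rewrite <- Rpower_mult_distr; auto. rewrite IHn; auto. apply pow_lt; auto. Qed.

Lemma Q_pow q k : (q^2)^k = (q^k)^2.
Proof. rewrite <- !pow_mult. f_equal. lia. Qed.

Lemma s_sq q nu : 0 < q -> Rpower (q^2) nu = Rpower q nu * Rpower q nu.
Proof. intros. replace (q^2) with (q*q) by ring. rewrite Rpower_mult_distr; auto. Qed.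

Lemma Rp_scale q b nu k : 0 < q -> 0 < b ->
  Rpower (q*b*(1*q^k)) nu = Rpower b nu * Rpower q nu ^ (S k).
Proof. intros Hq Hb. replace (q*b*(1*q^k)) with (b * q^(S k)) by (simpl; ring).
 rewrite <- Rpower_mult_distr; auto. rewrite Rpow_pow; auto. apply pow_lt; auto. Qed.

Lemma sq_scale q b k : (q*b*(1*q^k))^2 = b^2 * (q^2)^(S k).
Proof. rewrite <- (tech_pow_Rmult (q^2) k), Q_pow. ring. Qed.

Lemma term_eq q nu a b k : 0 < q < 1 -> 0 < a -> 0 < b ->
  (1 - q) * 1 * ((1 * q ^ k) * qJ q nu (q * b * (1 * q ^ k)) * qJ q nu (q * a * (1 * q ^ k)) * q ^ k)
  = ((1-q) * (/ qpoch_inf (q^2) (q^2))^2 * Rpower a nu * Rpower b nu * Rpower (q^2) nu / q^2)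
    * tt (G q nu) (q^2) (Rpower (q^2) nu) (a^2) (b^2) k.
Proof. intros Hq Ha Hb. rewrite !qJ_G. rewrite !Rp_scale; try lra. rewrite !sq_scale. unfold tt.
 set (Ga := G q nu (a ^ 2 * (q ^ 2) ^ S k)). set (Gb := G q nu (b ^ 2 * (q ^ 2) ^ S k)).
 set (kap := / qpoch_inf (q^2) (q^2)). rewrite s_sq by lra. rewrite <- (tech_pow_Rmult (q^2) k), Q_pow, Rpow_mult_distr.
 rewrite <- (tech_pow_Rmult (Rpower q nu) k). field. lra. Qed.

Lemma Derive_qJ q nu b : 0 < q < 1 -> -1 < nu -> 0 < b ->
  Derive (qJ q nu) b = nu * Rpower b (nu - 1) * / qpoch_inf (q^2) (q^2) * G q nu (b^2)
     + Rpower b nu * / qpoch_inf (q^2) (q^2) * (2 * b * G' q nu (b^2)).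
Proof. intros Hq Hnu Hb. rewrite (Derive_ext _ (fun x => Rpower x nu * / qpoch_inf (q^2) (q^2) * G q nu (x^2)))
  by (intros; apply qJ_G).
 apply is_derive_unique. eapply isd_eq.
 apply (isd_mult (fun x => Rpower x nu * / qpoch_inf (q^2) (q^2)) (fun x => G q nu (x^2))).
 apply (isd_mult (fun x => Rpower x nu) (fun _ => / qpoch_inf (q^2) (q^2))).
 apply is_derive_Reals. apply derivable_pt_lim_power; auto. apply isd_const.
 apply (isd_comp (G q nu) (fun x => x^2)). apply G_derive; auto.
 apply (is_derive_ext (fun x => x * x)). intros t; match goal with |- @eq _ ?a ?b => change (@eq R a b) end; ring. apply isd_mult; apply isd_id.
 cbv beta. match goal with |- @eq _ ?a ?b => change (@eq R a b) end. ring. Qed.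

Lemma mono_lt (j : nat -> R) : (forall n, j n < j (S n)) -> forall n m, (n < m)%nat -> j n < j m.
Proof. intros H n m Hnm. induction Hnm. apply H. specialize (H m). lra. Qed.

Lemma is_series_eq (a : nat -> R) (l l' : R) : is_series a l -> l = l' -> is_series a l'.
Proof. intros H ->; auto. Qed.

Lemma is_series_zero : is_series (fun _ : nat => 0) 0.
Proof. assert (H : is_lim_seq (sum_n (fun _ : nat => 0)) 0).
 { apply (is_lim_seq_ext (fun _ => 0)). intros N. induction N. rewrite sum_O; auto.
   rewrite sum_Sn, <- IHN. unfold plus; simpl. ring. apply is_lim_seq_const. }
 exact H. Qed.



Lemma is_series_scal_l' (c : R) (a : nat -> R) (l : R) : is_series a l -> is_series (fun n => c * a n) (c * l).
Proof. intros H. apply (is_series_scal_l c a l H). Qed.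

Theorem proposition3p5 (q nu : R) (j : nat -> R) :
  0 < q < 1 -> -1 < nu ->
  (forall n, 0 < j n) ->
  (forall n, j n < j (S n)) ->
  (forall n, qJ q nu (j n) = 0) ->
  (forall x, 0 < x -> qJ q nu x = 0 -> exists n, x = j n) ->
  forall n m : nat,
    is_qint q (fun x => x * qJ q nu (q * j n * x) * qJ q nu (q * j m * x)) 1
      (- / 2 * (1 - q) * Rpower q (nu - 1) * qJ q (nu + 1) (q * j n)
         * Derive (qJ q nu) (j n) * kdelta n m)
    /\ - / 2 * (1 - q) * Rpower q (nu - 1) * qJ q (nu + 1) (q * j n)
         * Derive (qJ q nu) (j n)
       = / 2 * (1 - q) ^ 2 * Rpower q (nu - 2) * Dq q (qJ q nu) (j n)
         * Derive (qJ q nu) (j n)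
    /\ / 2 * (1 - q) ^ 2 * Rpower q (nu - 2) * Dq q (qJ q nu) (j n)
         * Derive (qJ q nu) (j n)
       = - / 2 * (1 - q) * Rpower q (nu - 2) * / j n * qJ q nu (q * j n)
         * Derive (qJ q nu) (j n)
    /\ - / 2 * (1 - q) * Rpower q (nu - 2) * / j n * qJ q nu (q * j n)
         * Derive (qJ q nu) (j n)
       = - / 2 * (1 - q) * Rpower q (-2) * qJ q (nu + 1) (j n)
         * Derive (qJ q nu) (j n).
Proof.
 intros Hq Hnu Hpos Hmono Hzero _ n m.
 set (kap := / qpoch_inf (q^2) (q^2)).
 destruct (Req_dec kap 0) as [Hk0 | Hk0].
 -
   assert (Hz : forall mu x, qJ q mu x = 0).
   { intros. rewrite qJ_G. fold kap. rewrite Hk0. ring. }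
   unfold Dq. rewrite !Hz. split; [|split; [|split]]; unfold Rdiv; try ring.
   unfold is_qint. eapply is_series_ext. 2: eapply is_series_eq. 2: apply is_series_zero.
   intros k. rewrite !Hz. req. req.
 - assert (HGz : forall i, G q nu (j i ^ 2) = 0).
   { intros i. pose proof (Hzero i) as Hi. rewrite qJ_G in Hi. fold kap in Hi.
     assert (0 < Rpower (j i) nu) by (unfold Rpower; apply exp_pos).
     destruct (Rmult_integral _ _ Hi) as [Hi2|Hi2]; auto.
     destruct (Rmult_integral _ _ Hi2); [lra | contradiction]. }
   pose proof (Hpos n) as Hb. set (b := j n) in *.
   assert (Hq0 : q <> 0) by lra. assert (Hb0 : b <> 0) by lra. assert (H1q : 1 - q <> 0) by lra.
   pose proof (G2 q nu (b^2) Hq Hnu) as HR2. pose proof (G1 q nu (b^2) Hq Hnu) as HR1.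
   assert (Hs: Rpower q (2*nu+2) = Rpower q nu * Rpower q nu * q^2).
   { rewrite <- Rp2 by lra. rewrite <- !Rpower_plus. f_equal; ring. }
   assert (HGb : G q nu (b^2) = 0) by apply HGz.
   rewrite Hs in HR1. rewrite HGb in HR1, HR2.
   set (r := Rpower q nu) in *. set (c := Rpower b nu).
   set (h := G q (nu+1) (q^2 * b^2)) in *.
   assert (EG : G q nu (q^2*b^2) = q^2 * b^2 * h) by lra.
   assert (EH : G q (nu+1) (b^2) = r * r * q^2 * h) by lra.
   assert (EJq : qJ q nu (q*b) = r * c * kap * (q^2*b^2*h)).
   { rewrite qJ_G. fold kap. rewrite Rpow_mult_distr, EG, <- Rpower_mult_distr by lra. reflexivity. }
   assert (EJ1q : qJ q (nu+1) (q*b) = r * c * (q*b) * kap * h).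
   { rewrite qJ_G. fold kap. rewrite Rpow_mult_distr. fold h. rewrite Rpower_plus, Rpower_1 by nra.
     rewrite <- Rpower_mult_distr by lra. reflexivity. }
   assert (EJ1 : qJ q (nu+1) b = c * b * kap * (r * r * q^2 * h)).
   { rewrite qJ_G. fold kap. rewrite EH, Rpower_plus, Rpower_1 by lra. reflexivity. }
   assert (Ep1 : Rpower q (nu - 1) = r * / q).
   { unfold Rminus. rewrite Rpower_plus, Rpower_Ropp, Rpower_1 by lra. reflexivity. }
   assert (Ep2 : Rpower q (nu - 2) = r * / q^2).
   { unfold Rminus. rewrite Rpower_plus, Rpower_Ropp, Rp2 by lra. reflexivity. }
   assert (Ep3 : Rpower q (-2) = / q^2).
   { replace (-2) with (- (2)) by ring. rewrite Rpower_Ropp, Rp2 by lra. reflexivity. }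
   assert (EDq : Dq q (qJ q nu) b = - (r * c * kap * (q^2*b^2*h)) / ((1-q) * b)).
   { unfold Dq. rewrite EJq. replace (qJ q nu b) with 0 by (symmetry; apply Hzero). field. split; auto. }
   set (D := Derive (qJ q nu) b).
   split; [|split; [|split]].
   2,3,4: rewrite ?EJq, ?EJ1q, ?EJ1, ?Ep1, ?Ep2, ?Ep3, ?EDq; field; auto.
   unfold is_qint. pose proof (Hpos m) as Ha.
   eapply is_series_ext. { intros k. symmetry. apply (term_eq q nu (j m) b k Hq Ha Hb). }
   set (K := (1 - q) * (/ qpoch_inf (q ^ 2) (q ^ 2)) ^ 2 * Rpower (j m) nu * Rpower b nu *
      Rpower (q ^ 2) nu / q ^ 2).
   destruct (Nat.eq_dec n m) as [Hnm | Hnm].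
   + subst m. fold b in K |- *.
     apply (is_series_eq _ (K * (- dVt q nu (b^2) 0))).
     apply is_series_scal_l'. apply series_diag; auto. apply pow_le; lra.
     unfold kdelta. rewrite Nat.eqb_refl. unfold dVt. rewrite !pow_O, !pow_1, !Rmult_1_r.
     rewrite HGb. replace (b^2*q^2) with (q^2*b^2) by ring. rewrite EG.
     unfold D. rewrite Derive_qJ by auto. fold kap. fold b. rewrite HGb.
     rewrite EJ1q, Ep1. unfold K. fold kap. fold c. rewrite s_sq by lra. fold r.
     field. auto.
   + assert (Hjm : j m <> b).
     { unfold b. destruct (Nat.lt_total n m) as [Hl|[Hl|Hl]].
       - pose proof (mono_lt j Hmono n m Hl). lra.
       - contradiction.
       - pose proof (mono_lt j Hmono m n Hl). lra. }
     assert (Hjm2 : j m ^ 2 <> b^2) by (intro; apply Hjm; nra).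
     apply (is_series_eq _ (K * (Vt (G q nu) (q^2) (j m ^ 2) (b^2) 0 / (b^2 - j m ^ 2)))).
     apply is_series_scal_l'. apply series_off; auto; apply pow_le; lra.
     unfold kdelta. rewrite (proj2 (Nat.eqb_neq n m) Hnm). unfold Vt. rewrite !pow_O, !Rmult_1_r.
     rewrite HGb, (HGz m). unfold Rdiv. ring.
Qed.
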